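(* Let $K\subset S^3$ be a knot whose A-polynomial $A_K(L,M)$ is irreducible in $\mathbb{C}[L,M]$ and satisfies $A_K(-L,M)\neq A_K(L,M)$. Let $R_K(L,M):=\mathrm{Res}_\lambda\big(A_K(\lambda,M),\lambda^2-L\big)$. Then $R_K(L,M^2)$ is irreducible in $\mathbb{C}[L,M]$ and $\deg_L(R_K)=\deg_L(A_K)$.
   Context: $A_K(L,M)$ is the A-polynomial of Cooper–Culler–Gillet–Long–Shalen of $K$ (without the abelian factor $L-1$); it satisfies $A_K(L,-M)=A_K(L,M)$. $\mathrm{Res}_\lambda$ denotes the resultant eliminating the variable $\lambda$. *)

(* Defs.v *)
(* C = complex R for an arbitrary R : realType (i.e. C is the
   field of complex numbers); C[L,M] is represented as {poly {poly C}} with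
   outer indeterminate L and inner indeterminate M. *)
From HB Require Import structures.
From mathcomp Require Import all_boot all_order all_algebra.
From mathcomp Require Import reals complex.
Set Implicit Arguments. Unset Strict Implicit. Unset Printing Implicit Defensive.
Import Order.TTheory GRing.Theory Num.Theory.
Local Open Scope ring_scope.

Definition irreducible_elt (T : idomainType) (p : T) : Prop :=
  [/\ p != 0, p \isn't a GRing.unit &
      forall a b : T, p = a * b -> a \is a GRing.unit \/ b \is a GRing.unit].

Section Biv.
Variable F : fieldType.
Definition bipoly := {poly {poly F}}.

Definition negM (P : bipoly) : bipoly := map_poly (fun c => c \Po (- 'X)) P.
Definition negL (P : bipoly) : bipoly := P \Po (- 'X).
Definition sqM (P : bipoly) : bipoly := map_poly (fun c => c \Po 'X^2) P.
Definition degL (P : bipoly) : nat := (size P).-1.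
(* Res_lambda (P(lambda,M), lambda^2 - L): the polynomial P(lambda,M) has
   coefficients in C[M] embedded in C[L,M]; lambda is a fresh outer variable *)
Definition resL (P : bipoly) : bipoly :=
  resultant (map_poly polyC P) ('X^2 - ('X : bipoly)%:P).
End Biv.

(* Main.v *)
Require Import Defs.
From HB Require Import structures.
From mathcomp Require Import all_boot all_order all_algebra.
From mathcomp Require Import reals complex.
From mathcomp Require Import zify ring lra.
Set Implicit Arguments. Unset Strict Implicit. Unset Printing Implicit Defensive.
Import Order.TTheory GRing.Theory Num.Theory.
Local Open Scope ring_scope.

Module Part12.
Import Pdiv.Ring.

Section Res.
Variable R : idomainType.
Implicit Types p q : {poly R}.

Lemma rVpoly_sum d (u : 'rV[R]_d) : rVpoly u = \sum_(l < d) u 0 l *: 'X^l.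
Proof.
rewrite {1}(row_sum_delta u) linear_sum; apply: eq_bigr => l _.
by rewrite linearZ /= rVpoly_delta.
Qed.

Lemma rVpoly_row0 m n (u : 'rV[R]_m) :
  rVpoly (row_mx u (0 : 'rV[R]_n)) = rVpoly u.
Proof.
rewrite !rVpoly_sum big_split_ord /= [X in _ + X]big1 ?addr0 => [|l _].
  by apply: eq_bigr => l _; rewrite row_mxEl.
by rewrite row_mxEr mxE scale0r.
Qed.

Lemma det2_gen m (X : 'M[R]_m) (i0 i1 : 'I_m) :
  val i0 = 0%N -> val i1 = 1%N -> m = 2%N ->
  \det X = X i0 i0 * X i1 i1 - X i0 i1 * X i1 i0.
Proof.
move=> h0 h1 e; subst m.
have -> : i0 = 0 by apply: val_inj.
have -> : i1 = 1 by apply: val_inj.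
rewrite (expand_det_row _ 0) !big_ord_recl big_ord0 addr0.
rewrite /cofactor !det_mx11 !mxE /=.
rewrite /bump /= !expr0 !expr1 !mul1r.
have -> : lift 0 (0 : 'I_1) = 1 by apply: val_inj.
have -> : lift 1 (0 : 'I_1) = 0 by apply: val_inj.

idtac.
by rewrite mulN1r mulrN.
Qed.


Lemma resultant_block p q : q \is monic ->
  resultant p q =
  \det (\matrix_(k < (size q).-1)
          (poly_rV (rmodp ('X^k * p) q) : 'rV_((size q).-1))).
Proof.
move=> mq.
have q0 : q != 0 := monic_neq0 mq.
set m := (size q).-1; set n := (size p).-1.
have sq : size q = m.+1 by rewrite /m prednK // size_poly_gt0.
pose S := Sylvester_mx p q.
have rowUS k : row k (usubmx S) = poly_rV ('X^k * p).
  apply/rowP => j; rewrite !mxE.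
  rewrite (unsplitK (inl k) : split (lshift _ k) = inl k) !mxE /=.
  by rewrite rVpoly_delta.
have rowDS k : row k (dsubmx S) = poly_rV ('X^k * q).
  apply/rowP => j; rewrite !mxE.
  rewrite (unsplitK (inr k) : split (rshift _ k) = inr k) !mxE /=.
  by rewrite rVpoly_delta.
pose X : 'M[R]_m := \matrix_(k < m) (poly_rV (rmodp ('X^k * p) q) : 'rV_m).
pose Y : 'M[R]_(m, n) :=
  \matrix_(k < m) (poly_rV (rdivp ('X^k * p) q) : 'rV_n).
pose M0 : 'M[R]_(m + n) := col_mx (row_mx 1%:M 0) (dsubmx S).
have szr k : (size (rmodp ('X^k * p) q) <= m)%N.
  by rewrite -ltnS -sq ltn_rmodp.
have szd (k : 'I_m) : (size (rdivp ('X^k * p) q) <= n)%N.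
  have [->|p0] := eqVneq p 0; first by rewrite mulr0 rdiv0p size_poly0.
  set P := 'X^k * p.
  have sP : size P = (k + size p)%N by rewrite /P mulrC size_mulXn.
  have [d0|d0] := eqVneq (rdivp P q) 0; first by rewrite d0 size_poly0.
  have := Pdiv.RingMonic.rdivp_eq mq P.
  move/(congr1 (fun x => x - rmodp P q)); rewrite addrK => e.
  have := size_polyD P (- rmodp P q); rewrite size_polyN e size_mul // sq.
  rewrite addnS /= sP => h.
  have := szr k; have := ltn_ord k; have : (0 < size p)%N by rewrite size_poly_gt0.
  have h' : (size (rdivp P q) + m <= maxn (k + size p) (size (rmodp P q)))%N := h.
  have := size_poly_gt0 p; rewrite p0 => p0'.
  move: h' (szr k) (ltn_ord k) p0'; rewrite /n -/P.
  move: (size (rdivp P q)) (size (rmodp P q)) (size p) (nat_of_ord k) => a b c j.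
  lia.
have szP (k : 'I_m) : (size ('X^k * p)%R <= m + n)%N.
  have [->|p0] := eqVneq p 0; first by rewrite mulr0 size_poly0.
  rewrite mulrC size_mulXn // /n; have := ltn_ord k; have := size_poly_gt0 p.
  rewrite p0 /=; move: (size p) (nat_of_ord k) => a b; lia.
have szQ (l : 'I_n) : (size ('X^l * q)%R <= m + n)%N.
  rewrite mulrC size_mulXn // sq; have := ltn_ord l.
  move: (nat_of_ord l) => a; lia.
have eqS : S = block_mx X Y 0 1%:M *m M0.
  rewrite /M0 mul_block_col !mul0mx !mul1mx add0r mul_mx_row mulmx1 mulmx0.
  rewrite -[LHS](vsubmxK S); congr col_mx.
  apply/row_matrixP => k; apply: (can_inj (@rVpolyK _ _)).
  rewrite rowUS poly_rV_K // linearD /= row_mul row_row_mx row0 linearD /= rVpoly_row0.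
  rewrite rowK poly_rV_K // mulmx_sum_row linear_sum /=.
  rewrite (eq_bigr (fun l => Y k l *: ('X^l * q))) => [|l _]; last first.
    by rewrite linearZ /= rowDS poly_rV_K // [row k Y 0 l]mxE.
  have -> : \sum_(l < n) Y k l *: ('X^l * q) = rVpoly (row k Y) * q.
    rewrite rVpoly_sum mulr_suml; apply: eq_bigr => l _.
    by rewrite -scalerAl [row k Y 0 l]mxE.
  rewrite rowK poly_rV_K // addrC.
  exact: Pdiv.RingMonic.rdivp_eq.
have Dij (i : 'I_n) (c : 'I_(m + n)) : dsubmx S i c = ('X^i * q)`_c.
  by have := congr1 (fun u : 'rV[R]_(m + n) => u ord0 c) (rowDS i); rewrite !mxE.
have dM0 : \det M0 = 1.
  rewrite /M0 -[dsubmx S]hsubmxK -/(block_mx _ _ _ _) det_lblock det1 mul1r.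
  rewrite det_trig; last first.
    apply/is_trig_mxP => i j ij; rewrite mxE Dij coefXnM /=.
    case: ifP => // _; apply: nth_default; rewrite sq.
    move: ij; move: (nat_of_ord i) (nat_of_ord j) => a b; lia.
  apply: big1 => i _; rewrite mxE Dij coefXnM /= ltnNge leq_addl /=.
  by rewrite addnK -(eqP mq) lead_coefE.
by rewrite /resultant -/S eqS det_mulmx dM0 mulr1 det_ublock det1 mulr1.
Qed.

Lemma res_X2 p (c : R) :
  resultant p ('X^2 - c%:P) =
  (rmodp p ('X^2 - c%:P))`_0 ^+ 2 - c * (rmodp p ('X^2 - c%:P))`_1 ^+ 2.
Proof.
set q := 'X^2 - c%:P.
have mq : q \is monic by apply: monicXnsubC.
have sq : size q = 3%N by apply: size_XnsubC.
have sq1 : (size q).-1 = 2%N by rewrite sq.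
have h0 : (0 < (size q).-1)%N by rewrite sq1.
have h1 : (1 < (size q).-1)%N by rewrite sq1.
rewrite resultant_block // (@det2_gen _ _ (Ordinal h0) (Ordinal h1)) //.
rewrite !mxE /= expr0 mul1r expr1.
set r0 := rmodp p q.
set a := r0`_0; set b := r0`_1.
have sr0 : (size r0 <= 2)%N by rewrite -ltnS -sq ltn_rmodp monic_neq0.
have er0 : r0 = a%:P + b%:P * 'X.
  apply/polyP => i; rewrite coefD coefMX coefC.
  case: i => [|[|i]] /=; rewrite ?coefC ?addr0 ?add0r //.
  by rewrite nth_default // (leq_trans sr0).
have e1 : rmodp ('X * p) q = (b * c)%:P + a%:P * 'X.
  rewrite -Pdiv.RingMonic.rmodp_mulmr // -/r0 er0.
  have -> : 'X * (a%:P + b%:P * 'X) = b%:P * q + ((b * c)%:P + a%:P * 'X).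
    rewrite /q polyCM; ring.
  rewrite Pdiv.RingMonic.rmodp_addl_mul_small // sq.
  apply: leq_ltn_trans (size_polyD _ _) _.
  rewrite gtn_max (leq_ltn_trans (size_polyC_leq1 _)) //=.
  apply: leq_ltn_trans (size_polyMleq _ _) _; rewrite size_polyX.
  by have := size_polyC_leq1 a; case: (size a%:P) => [|[]].
rewrite e1 !coefD !coefMX !coefC /= !addr0 add0r.
by rewrite /a /b; ring.
Qed.

End Res.

Section Biv2.
Variable F : fieldType.
Local Notation B := (bipoly F).
Implicit Types P Q : B.

Definition sqL P : B := P \Po 'X^2.

Lemma sqL_resL P : sqL (resL P) = P * negL P.
Proof.
rewrite /resL /sqL res_X2.
set q := 'X^2 - ('X : B)%:P.
set r0 := rmodp _ q.
set a := r0`_0; set b := r0`_1.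
have mq : q \is monic by apply: monicXnsubC.
have sq : size q = 3%N by apply: size_XnsubC.
have sr0 : (size r0 <= 2)%N by rewrite -ltnS -sq ltn_rmodp monic_neq0.
have er0 : r0 = a%:P + b%:P * 'X.
  apply/polyP => i; rewrite coefD coefMX coefC.
  case: i => [|[|i]] /=; rewrite ?coefC ?addr0 ?add0r //.
  by rewrite nth_default // (leq_trans sr0).
pose h (x : B) (u : {poly B}) := (map_poly (comp_poly ('X^2 : B)) u).[x].
have hq x : x ^+ 2 = 'X^2 -> h x q = 0.
  move=> hx; rewrite /h /q rmorphB /= map_polyXn map_polyC /= comp_polyX.
  by rewrite hornerD hornerN hornerXn hornerC hx subrr.
have hA x : h x (map_poly polyC P) = P \Po x.
  rewrite /h; congr horner; apply/polyP => i.
  by rewrite !coef_map /= comp_polyC.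
have hr x : h x r0 = sqL a + sqL b * x.
  by rewrite /h er0 rmorphD rmorphM /= !map_polyC map_polyX hornerD hornerMX !hornerC.
have key x : x ^+ 2 = 'X^2 -> P \Po x = sqL a + sqL b * x.
  move=> hx; rewrite -hA -hr /h.
  rewrite {1}(Pdiv.RingMonic.rdivp_eq mq (map_poly polyC P)) -/r0.
  by rewrite rmorphD rmorphM /= hornerD hornerM -/(h x q) hq // mulr0 add0r.
rewrite /negL (key (- 'X)) ?sqrrN // -{1}(comp_polyXr P) (key 'X) //.
rewrite /sqL !expr2 comp_polyB !comp_polyM comp_polyX.
ring.
Qed.

End Biv2.

End Part12.
Import Part12.

Section Alg.
Variable F : closedFieldType.
Local Notation T := {poly F}.
Local Notation B := {poly {poly F}}.
Implicit Types P Q X Y Z : B.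

Definition dvd P X := exists w, X = P * w.

Definition evM (z : F) (X : B) : {poly F} := map_poly (horner_eval z) X.

Lemma evMM z X Y : evM z (X * Y) = evM z X * evM z Y.
Proof. by rewrite /evM rmorphM. Qed.

Lemma evMC z (c : T) X : evM z (c%:P * X) = c.[z] *: evM z X.
Proof. by rewrite evMM /evM map_polyC /= mul_polyC. Qed.

Lemma evM_eq0 z X : evM z X = 0 ->
  X = ('X - z%:P)%:P * map_poly (fun c => c %/ ('X - z%:P)) X.
Proof.
move=> h; apply/polyP => i; rewrite coefCM coef_map_id0 ?div0p //.
have : (evM z X)`_i = 0 by rewrite h coef0.
rewrite /evM coef_map /= /horner_eval => hz.
by rewrite mulrC divpK // dvdp_XsubCl /root hz.
Qed.

Lemma unitT (c : T) : (c \is a GRing.unit) = (size c == 1%N).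
Proof.
rewrite poly_unitE; case: (eqVneq (size c) 1%N) => //= s1.
have -> : c`_0 = lead_coef c by rewrite lead_coefE s1.
by rewrite unitfE lead_coef_eq0 -size_poly_gt0 s1.
Qed.

Lemma unitB P : (P \is a GRing.unit) = (size P == 1%N) && (size P`_0 == 1%N).
Proof. by rewrite poly_unitE unitT. Qed.

Lemma gauss_lemma (c : T) X Y Z : c != 0 -> c%:P * X = Y * Z ->
  exists d1 d2 Y' Z', [/\ Y = d1%:P * Y', Z = d2%:P * Z' & X = Y' * Z'].
Proof.
move: {2}(size c) (leqnn (size c)) => n; elim: n c X Y Z => [|n IH] c X Y Z.
  by rewrite size_poly_leq0 => /eqP->; rewrite eqxx.
move=> sc c0 e.
have [/eqP c1|] := eqVneq (size c) 1%N.
  have cu : c \is a GRing.unit by rewrite unitT c1.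
  exists c, 1, (c^-1%:P * Y), Z; split; rewrite ?mul1r //.
    by rewrite mulrA -polyCM divrr // mul1r.
  by rewrite -mulrA -e mulrA -polyCM mulVr // mul1r.
move/closed_rootP => [z rz].
have dz : ('X - z%:P) %| c by rewrite dvdp_XsubCl.
set c' := c %/ ('X - z%:P).
have ec : c = c' * ('X - z%:P) by rewrite divpK.
have c'0 : c' != 0 by apply: contraNneq c0 => h; rewrite ec h mul0r.
have sc' : (size c' <= n)%N.
  move: sc; rewrite ec size_mul ?polyXsubC_eq0 // size_XsubC addn2 /=.
  by [].
have nzX : ('X - z%:P)%:P != 0 :> B by rewrite polyC_eq0 polyXsubC_eq0.
have : evM z (Y * Z) = 0 by rewrite -e evMC -/(root c z) (eqP rz) scale0r.
rewrite evMM => /eqP; rewrite mulf_eq0 => /orP[] /eqP /evM_eq0 h.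
- move: e; rewrite {}h ec polyCM -!mulrA [LHS]mulrCA; move=> e0; have e := mulfI nzX e0.
  have [d1 [d2 [Y' [Z' [h1 h2 h3]]]]] := IH _ _ _ _ sc' c'0 e.
  exists (('X - z%:P) * d1), d2, Y', Z'; split => //.
  by rewrite h1 polyCM mulrA.
- move: e; rewrite {}h ec polyCM -!mulrA [LHS]mulrCA [RHS]mulrCA.
  move=> e0; have e := mulfI nzX e0.
  have [d1 [d2 [Y' [Z' [h1 h2 h3]]]]] := IH _ _ _ _ sc' c'0 e.
  exists d1, (('X - z%:P) * d2), Y', Z'; split => //.
  by rewrite h2 polyCM mulrA.
Qed.

Lemma strip_lemma P (c : T) h w : (forall z, evM z P != 0) -> c != 0 ->
  c%:P * h = P * w -> dvd P h.
Proof.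
move=> nr c0 e.
have [d1 [d2 [P' [w' [h1 h2 h3]]]]] := gauss_lemma c0 e.
have [/eqP s1|] := eqVneq (size d1) 1%N; last first.
  move/closed_rootP => [z rz]; have := nr z.
  by rewrite h1 evMC (eqP rz) scale0r eqxx.
have du : d1 \is a GRing.unit by rewrite unitT s1.
exists (d1^-1%:P * w'); rewrite h3 h1.
have k : d1%:P * (d1^-1)%:P = 1 :> B by rewrite -rmorphM /= mulrV.
transitivity (P' * w' * (d1%:P * (d1^-1)%:P)); first by rewrite k mulr1.
ring.
Qed.

Lemma noroot P : irreducible_elt P -> (0 < degL P)%N ->
  forall z, evM z P != 0.
Proof.
move=> [P0 Pnu irr] dP z; apply/negP => /eqP h.
have e := evM_eq0 h.
have [U|U] := irr _ _ e.
  by move: U; rewrite unitB size_polyC polyXsubC_eq0 /= coefC /= size_XsubC.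
move: U; rewrite unitB => /andP[/eqP s1 _].
move: dP; rewrite /degL e mul_polyC size_scale ?s1 //.
by rewrite polyXsubC_eq0.
Qed.

Lemma prime_irr P g h : irreducible_elt P -> (0 < degL P)%N ->
  dvd P (g * h) -> dvd P g \/ dvd P h.
Proof.
move=> irrP dP [w ew].
have nr := noroot irrP dP.
have P0 : P != 0 by case: irrP.
suff: forall n (r u v : B), (size r <= n)%N -> r != 0 -> r = u * P + v * g ->
    dvd P g \/ dvd P h.
  by move/(_ (size P) P 1 0 (leqnn _) P0); apply; rewrite mul1r mul0r addr0.
elim => [|n IH] r u v.
  by rewrite size_poly_leq0 => /eqP->; rewrite eqxx.
move=> sr r0 er.
have lc0 : lead_coef r != 0 by rewrite lead_coef_eq0.
have em X : X %% r = (lead_coef r ^+ scalp X r)%:P * X - X %/ r * r.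
  by rewrite mul_polyC Pdiv.Idomain.divp_eq addrC addKr.
have szm X : (size (X %% r)%R <= n)%N.
  by rewrite -ltnS (leq_trans _ sr) // Pdiv.Idomain.ltn_modp.
have [mP|mP] := eqVneq (P %% r) 0; last first.
  move: (em P); set K := (_ ^+ _)%:P; set Q := P %/ r => e.
  apply: (IH _ (K - Q * u) (- (Q * v)) (szm P) mP).
  rewrite e; clearbody K Q; rewrite er; ring.
have [mg|mg] := eqVneq (g %% r) 0; last first.
  move: (em g); set K := (_ ^+ _)%:P; set Q := g %/ r => e.
  apply: (IH _ (- (Q * u)) (K - Q * v) (szm g) mg).
  rewrite e; clearbody K Q; rewrite er; ring.
move: (em P) (em g); rewrite mP mg.
set K1 := (lead_coef r ^+ scalp P r); set K2 := (lead_coef r ^+ scalp g r).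
set Q1 := P %/ r; set Q2 := g %/ r.
have K10 : K1 != 0 by rewrite expf_neq0.
have K20 : K2 != 0 by rewrite expf_neq0.
clearbody K1 K2 Q1 Q2.
move/eqP; rewrite eq_sym subr_eq0 => /eqP e1.
move/eqP; rewrite eq_sym subr_eq0 => /eqP e2.
have e1' : K1%:P * P = r * Q1 by rewrite e1 mulrC.
have [d1 [d2 [r' [Q' [h1 h2 h3]]]]] := gauss_lemma K10 e1'.
case: irrP => _ _ irr.
have [U|U] := irr _ _ h3.
  move: (U); rewrite unitB => /andP[/eqP s1 _].
  have er' : r' = (r'`_0)%:P by apply: size1_polyC; rewrite s1.
  right; apply: (@strip_lemma P (d1 * r'`_0) h (u * h + v * w) nr).
    by apply: contraNneq r0 => e0; rewrite h1 er' -rmorphM /= e0 rmorph0.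
  rewrite rmorphM /= -er' -h1 er mulrDl -[v * g * h]mulrA ew; ring.
left; apply: (@strip_lemma P K2 g (Q2 * d1%:P / Q') nr K20).
have er' : r' = P / Q' by rewrite h3 mulrK.
by rewrite e2 h1 er'; ring.
Qed.


End Alg.

Section Subst.
Variable F : numClosedFieldType.
Local Notation T := {poly F}.
Local Notation B := (bipoly F).
Implicit Types P Q X Y : B.

Lemma twice0 (x : T) : x + x = 0 -> x = 0.
Proof.
move=> h; have : (2%:R : F) *: x = 0 by rewrite scaler_nat mulr2n.
by move/eqP; rewrite scaler_eq0 pnatr_eq0 /= => /eqP.
Qed.

Lemma X2N : ('X^2 : T) \Po (- 'X) = 'X^2.
Proof. by rewrite rmorphXn /= comp_polyX sqrrN. Qed.

Lemma even_odd_N (c : T) :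
  c \Po (- 'X) = (even_poly c \Po 'X^2) - (odd_poly c \Po 'X^2) * 'X.
Proof.
rewrite -{1}(poly_even_odd c) comp_polyD comp_polyM comp_polyX.
by rewrite -!comp_polyA X2N mulrN.
Qed.

Lemma compN_even (c : T) : c \Po (- 'X) = c -> c = even_poly c \Po 'X^2.
Proof.
move=> e; have h1 := even_odd_N c; have h2 := poly_even_odd c.
set E := even_poly c \Po 'X^2 in h1 h2 *.
set O := (odd_poly c \Po 'X^2) * 'X in h1 h2.
have h : O + O = 0.
  have -> : O + O = (E + O) - (E - O) by ring.
  by rewrite h2 -h1 e subrr.
by rewrite -{1}h2 (twice0 h) addr0.
Qed.

Lemma compN_odd (c : T) : c \Po (- 'X) = - c ->
  c = (odd_poly c \Po 'X^2) * 'X.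
Proof.
move=> e; have h1 := even_odd_N c; have h2 := poly_even_odd c.
set E := even_poly c \Po 'X^2 in h1 h2.
set O := (odd_poly c \Po 'X^2) * 'X in h1 h2 *.
have h : E + E = 0.
  have -> : E + E = (E - O) + (E + O) by ring.
  by rewrite h2 -h1 e addNr.
by rewrite -{1}h2 (twice0 h) add0r.
Qed.

Lemma compN (R : comNzRingType) (p q : {poly R}) : (- p) \Po q = - (p \Po q).
Proof. by rewrite -sub0r comp_polyB comp_poly0 sub0r. Qed.

Definition rotM P : B := map_poly (comp_poly ('i *: 'X)) P.

Lemma negME P : negM P = map_poly (comp_poly (- 'X)) P. Proof. by []. Qed.
Lemma sqME P : sqM P = map_poly (comp_poly 'X^2) P. Proof. by []. Qed.

Lemma coef_mapc (q : T) P i : (map_poly (comp_poly q) P)`_i = P`_i \Po q.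
Proof. exact: coef_map. Qed.

Lemma size_iX : size ('i *: 'X : T) = 2%N.
Proof. by rewrite size_scale ?neq0Ci // size_polyX. Qed.
Lemma size_NX : size (- 'X : T) = 2%N.
Proof. by rewrite size_polyN size_polyX. Qed.
Lemma size_X2 (R : idomainType) : size ('X^2 : {poly R}) = 3%N.
Proof. by rewrite size_polyXn. Qed.

Lemma size_mapc (q : T) P : (1 < size q)%N ->
  size (map_poly (comp_poly q) P) = size P.
Proof.
move=> sq; have [->|P0] := eqVneq P 0; first by rewrite rmorph0.
by apply: size_map_poly_id0; rewrite /= comp_poly_eq0 // lead_coef_eq0.
Qed.

Lemma mapc_eq0 (q : T) P : (1 < size q)%N ->
  (map_poly (comp_poly q) P == 0) = (P == 0).
Proof. by move=> sq; rewrite -!size_poly_eq0 size_mapc. Qed.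

Lemma unit_mapc (q : T) P : (1 < size q)%N ->
  (map_poly (comp_poly q) P \is a GRing.unit) = (P \is a GRing.unit).
Proof.
move=> sq; rewrite !unitB size_mapc // coef_mapc.
case: (size P == 1%N) => //=.
have [->|c0] := eqVneq P`_0 0; first by rewrite comp_poly0.
apply/eqP/eqP => h.
  have := size_comp_poly P`_0 q; rewrite h /= => /esym /eqP.
  rewrite muln_eq0 => /orP[/eqP|]; last by move: sq; case: (size q) => [|[]].
  by move: c0; rewrite -size_poly_eq0; case: (size P`_0) => [|[]].
by rewrite (size1_polyC (eq_leq h)) comp_polyC -(size1_polyC (eq_leq h)) h.
Qed.

Lemma mapc_comp (q r : T) P :
  map_poly (comp_poly q) (map_poly (comp_poly r) P) =
  map_poly (comp_poly (r \Po q)) P.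
Proof. by apply/polyP => i; rewrite !coef_mapc comp_polyA. Qed.

Lemma mapcX P : map_poly (comp_poly 'X) P = P.
Proof. by apply/polyP => i; rewrite !coef_mapc comp_polyXr. Qed.

Lemma negMK P : negM (negM P) = P.
Proof.
by rewrite !negME mapc_comp [X in comp_poly X]compN comp_polyX opprK mapcX.
Qed.

Lemma rotM2 P : rotM (rotM P) = negM P.
Proof.
rewrite /rotM negME mapc_comp linearZ /= comp_polyX scalerA.
by rewrite -expr2 sqrCi scaleN1r.
Qed.

Lemma rotM_sqM P : rotM (sqM P) = sqM (negM P).
Proof.
rewrite /rotM !sqME negME !mapc_comp rmorphXn /= comp_polyX [X in _ = map_poly (comp_poly X) _]compN.
by rewrite comp_polyX exprZn sqrCi scaleN1r.
Qed.

Lemma rotM4 P : rotM (rotM (rotM (rotM P))) = P.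
Proof. by rewrite !rotM2 negMK. Qed.

Lemma negM_sqM P : negM (sqM P) = sqM P.
Proof.
by rewrite negME sqME mapc_comp rmorphXn /= comp_polyX sqrrN.
Qed.

Lemma sqM_negL P : sqM (negL P) = negL (sqM P).
Proof. by rewrite sqME /negL map_comp_poly rmorphN /= map_polyX. Qed.

Lemma sqM_sqL P : sqM (sqL P) = sqL (sqM P).
Proof. by rewrite sqME /sqL map_comp_poly rmorphXn /= map_polyX. Qed.

Lemma X2N_gen (R : comNzRingType) : ('X^2 : {poly R}) \Po (- 'X) = 'X^2.
Proof. by rewrite rmorphXn /= comp_polyX sqrrN. Qed.

Lemma negL_sqL P : negL (sqL P) = sqL P.
Proof. by rewrite /negL /sqL -comp_polyA X2N_gen. Qed.

Lemma negLK P : negL (negL P) = P.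
Proof. by rewrite /negL -comp_polyA compN comp_polyX opprK comp_polyXr. Qed.

Lemma sqM_inj : injective (@sqM F).
Proof.
move=> P Q e; apply/eqP; rewrite -subr_eq0 -(mapc_eq0 _ (q := 'X^2)) ?size_X2 //.
by rewrite rmorphB /= -!sqME e subrr.
Qed.

Lemma sqL_inj : injective (@sqL F).
Proof.
move=> P Q e; apply/eqP; rewrite -subr_eq0 -(comp_poly_eq0 _ (q := 'X^2)) ?size_X2 //.
by rewrite comp_polyB -!/(sqL _) e subrr.
Qed.

Lemma negL_inj : injective (@negL F).
Proof. exact: can_inj negLK. Qed.

Lemma size_negL P : size (negL P) = size P.
Proof. by rewrite size_comp_poly2 // size_polyN size_polyX. Qed.

Lemma size_sqL P : (size (sqL P)).-1 = ((size P).-1 * 2)%N.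
Proof. by rewrite size_comp_poly size_X2. Qed.

Lemma evenM X : negM X = X -> X = sqM (map_poly (@even_poly _) X).
Proof.
move=> e; apply/polyP => i; rewrite sqME coef_mapc coef_map /=.
apply: compN_even; have := congr1 (fun Y : B => Y`_i) e.
by rewrite /= negME coef_mapc.
Qed.

Lemma oddM X : negM X = - X ->
  X = ('X : T)%:P * sqM (map_poly (@odd_poly _) X).
Proof.
move=> e; apply/polyP => i; rewrite coefCM sqME coef_mapc coef_map /= mulrC.
apply: compN_odd; have := congr1 (fun Y : B => Y`_i) e.
by rewrite /= negME coef_mapc coefN.
Qed.

Lemma unitE (u : B) : u \is a GRing.unit -> u = (u`_0`_0)%:P%:P.
Proof.
rewrite unitB => /andP[/eqP s1 /eqP s2].
rewrite {1}(size1_polyC (eq_leq s1)) {1}(size1_polyC (eq_leq s2)).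
by [].
Qed.

Lemma mapc_const (q : T) (c : F) : map_poly (comp_poly q) (c%:P%:P : B) = c%:P%:P.
Proof. by rewrite map_polyC /= comp_polyC. Qed.

Lemma mapc_unit (q : T) (u : B) : u \is a GRing.unit -> map_poly (comp_poly q) u = u.
Proof. by move/unitE ->; rewrite mapc_const. Qed.

Lemma rotMM P Q : rotM (P * Q) = rotM P * rotM Q.
Proof. by rewrite /rotM rmorphM. Qed.
Lemma negMM P Q : negM (P * Q) = negM P * negM Q.
Proof. by rewrite negME rmorphM. Qed.
Lemma sqMM P Q : sqM (P * Q) = sqM P * sqM Q.
Proof. by rewrite sqME rmorphM. Qed.

Lemma irr_rotM P : irreducible_elt P -> irreducible_elt (rotM P).
Proof.
move=> [P0 Pnu irr]; split.
- by rewrite /rotM mapc_eq0 // size_iX.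
- by rewrite /rotM unit_mapc // size_iX.
move=> a b e.
have : P = rotM (rotM (rotM a)) * rotM (rotM (rotM b)).
  by rewrite -!rotMM -e rotM4.
have ui : (1 < size ('i *: 'X : T))%N by rewrite size_iX.
by move/irr => [] U; [left|right]; move: U; rewrite /rotM !unit_mapc.
Qed.

Lemma irr_negM P : irreducible_elt P -> irreducible_elt (negM P).
Proof. by move=> h; rewrite -rotM2; apply/irr_rotM/irr_rotM. Qed.

End Subst.

Section Main.
Variable F : numClosedFieldType.
Local Notation T := {poly F}.
Local Notation B := (bipoly F).
Implicit Types P Q X Y : B.

Lemma sqM_eq0 P : (sqM P == 0) = (P == 0).
Proof. by rewrite sqME mapc_eq0 // size_X2. Qed.

Lemma sqM_unit P : (sqM P \is a GRing.unit) = (P \is a GRing.unit).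
Proof. by rewrite sqME unit_mapc // size_X2. Qed.

Lemma negM_unit P : (negM P \is a GRing.unit) = (P \is a GRing.unit).
Proof. by rewrite negME unit_mapc // size_NX. Qed.

Lemma sqM_u (u : B) : u \is a GRing.unit -> sqM u = u.
Proof. by move=> U; rewrite sqME mapc_unit. Qed.
Lemma negM_u (u : B) : u \is a GRing.unit -> negM u = u.
Proof. by move=> U; rewrite negME mapc_unit. Qed.
Lemma rotM_u (u : B) : u \is a GRing.unit -> rotM u = u.
Proof. by move=> U; rewrite /rotM mapc_unit. Qed.

Lemma evenMM (g : B) : g * negM g = sqM (map_poly (@even_poly _) (g * negM g)).
Proof. by apply: evenM; rewrite negMM negMK mulrC. Qed.

Section Fac.
Variable A : B.
Hypothesis irrA : irreducible_elt A.
Hypothesis dA : (0 < degL A)%N.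
Hypothesis eA : negM A = A.

Lemma key_fac (g h : B) : sqM A = g * h -> h \isn't a GRing.unit ->
  dvd A (map_poly (@even_poly _) (g * negM g)) ->
  exists2 s, s \is a GRing.unit & g = s * negM h.
Proof.
move=> e hU [k ek].
have A0 : A != 0 by case: irrA.
have g0 : g != 0.
  by apply: contra_neq A0 => g0; apply/eqP; rewrite -sqM_eq0 e g0 mul0r.
have e1 : negM g = h * sqM k.
  apply: (mulfI g0); rewrite evenMM ek sqMM e; ring.
have e2 : g = negM h * sqM k by rewrite -[g]negMK e1 negMM negM_sqM.
have eH := evenMM h.
set H := map_poly _ (h * negM h) in eH.
have eAH : A = k * H.
  apply: sqM_inj; rewrite sqMM -eH e e2; ring.
case: irrA => _ _ irr.
have [kU|HU] := irr _ _ eAH.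
  by exists (sqM k); [rewrite sqM_unit | rewrite e2 mulrC].
by move: HU; rewrite -sqM_unit -eH unitrM (negbTE hU).
Qed.

Lemma factor_lemma (g h : B) : sqM A = g * h -> g \isn't a GRing.unit ->
  h \isn't a GRing.unit -> exists2 s, s \is a GRing.unit & g = s * negM h.
Proof.
move=> e gU hU.
have eG := evenMM g; have eH := evenMM h.
set G := map_poly _ (g * negM g) in eG.
set H := map_poly _ (h * negM h) in eH.
have eAA : G * H = A * A.
  apply: sqM_inj; rewrite !sqMM -eG -eH.
  rewrite -{2}(negM_sqM A) e negMM; ring.
have [] := prime_irr irrA dA (ex_intro _ A eAA) => hd.
  exact: key_fac e hU hd.
have [s sU es] := key_fac (esym (etrans (mulrC _ _) (esym e))) gU hd.
exists s^-1; first by rewrite unitrV.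
by rewrite es negMM negMK negM_u // mulKr.
Qed.

Lemma twice0B (X : B) : X + X = 0 -> X = 0.
Proof.
move=> e; apply/polyP => i; rewrite coef0; apply: twice0.
by rewrite -coefD e coef0.
Qed.

Lemma size_unitM (u X : B) : u \is a GRing.unit -> size (u * X) = size X.
Proof.
move=> U; have uc := unitE U.
have c0 : (u`_0`_0)%:P != 0 :> T.
  apply/negP => /eqP c0; move: U; rewrite uc c0 rmorph0 unitr0.
  by [].
by rewrite uc mul_polyC size_scale.
Qed.

Lemma Xnunit : (('X : T)%:P : B) \isn't a GRing.unit.
Proof. by rewrite unitB size_polyC polyX_eq0 /= coefC /= size_polyX. Qed.

Lemma irr_sqM : irreducible_elt (sqM A).
Proof.
have A0 : A != 0 by case: irrA.
have [_ AnU irr] := irrA.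
split; first by rewrite sqM_eq0.
  by rewrite sqM_unit.
move=> g h e.
case gU: (g \is a GRing.unit); first by left.
case hU: (h \is a GRing.unit); first by right.
exfalso.
have [s sU es] := factor_lemma e (negbT gU) (negbT hU).
have h0 : h != 0.
  by apply: contra_neq A0 => h0; apply/eqP; rewrite -sqM_eq0 e h0 mulr0.
have irrh : irreducible_elt h.
  split; [exact: h0 | by rewrite hU | move=> h1 h2 eh].
  case h1U: (h1 \is a GRing.unit); first by left.
  case h2U: (h2 \is a GRing.unit); first by right.
  exfalso.
  have e' : sqM A = (g * h1) * h2 by rewrite e eh mulrA.
  have gh1U : g * h1 \isn't a GRing.unit by rewrite unitrM gU.
  have [s' s'U es'] := factor_lemma e' gh1U (negbT h2U).
  have nh20 : negM h2 != 0.
    apply: contra_neq h0 => n0; rewrite eh -[h2]negMK n0.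
    by rewrite negME rmorph0 mulr0.
  have : s' = s * negM h1 * h1.
    apply: (mulIf nh20); rewrite -es' es eh negMM; ring.
  move=> es''; move: s'U; rewrite es'' !unitrM h1U.
  by rewrite andbF.
have dh : (1 < size h)%N.
  have := dA; rewrite /degL -(size_mapc _ (q := 'X^2)) ?size_X2 // -sqME e es.
  rewrite -mulrA size_unitM // size_mul //; last first.
    by apply: contra_neq h0 => n0; rewrite -[h]negMK n0 negME rmorph0.
  rewrite negME size_mapc ?size_NX //.
  by case: (size h) => [|[|]].
have {}dh : (0 < degL h)%N by rewrite /degL -subn1 subn_gt0.
have rP : rotM (sqM A) = sqM A by rewrite rotM_sqM eA.
have hd : dvd h (rotM g * rotM h).
  by exists g; rewrite -rotMM -e rP e mulrC.
have [v vU ev] : exists2 v, v \is a GRing.unit & negM h = h * v.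
  have [[w ew]|[w ew]] := prime_irr irrh dh hd.
    have irrY : irreducible_elt (rotM (negM h)) by apply/irr_rotM/irr_negM.
    have eY : rotM (negM h) = h * (s^-1 * w).
      by rewrite mulrCA -ew es rotMM (rotM_u sU) mulKr.
    case: irrY => _ _ /(_ _ _ eY) []; first by rewrite hU.
    move=> kU; set k := s^-1 * w in eY kU.
    have : h = rotM h * k.
      by rewrite -{1}[h]negMK -rotM2 eY rotMM (rotM_u kU).
    move=> ehk; exists (k^-1 * k^-1); first by rewrite unitrM unitrV kU.
    have erh : rotM h = h * k^-1 by rewrite {2}ehk mulrK.
    have kiU : k^-1 \is a GRing.unit by rewrite unitrV.
    by rewrite -rotM2 erh rotMM (rotM_u kiU) erh mulrA.
  have irrY : irreducible_elt (rotM h) by apply/irr_rotM.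
  case: irrY => _ _ /(_ _ _ ew) []; first by rewrite hU.
  move=> wU; exists (w * w); first by rewrite unitrM wU.
  by rewrite -rotM2 ew rotMM (rotM_u wU) ew mulrA.
have vv : v * v = 1.
  by apply: (mulfI h0); rewrite mulr1 mulrA -ev -{1}(negM_u vU) -negMM -ev negMK.
have [v1|v1] : v = 1 \/ v = -1.
  have : (v - 1) * (v + 1) = 0 by rewrite mulrDr !mulrBl vv; ring.
  by move/eqP; rewrite mulf_eq0 subr_eq0 addr_eq0 => /orP[]/eqP; [left|right].
  have ehh : negM h = h by rewrite ev v1 mulr1.
  have eh := evenM ehh.
  set h' := map_poly _ h in eh.
  have eA2 : A = (s * h') * h'.
    by apply: sqM_inj; rewrite !sqMM (sqM_u sU) -eh e es ev v1 mulr1.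
  have [] := irr _ _ eA2.
    by rewrite unitrM => /andP[_ U]; move: hU; rewrite eh sqM_unit U.
  by move=> U; move: hU; rewrite eh sqM_unit U.
have ehh : negM h = - h by rewrite ev v1 mulrN1.
have eh := oddM ehh.
set h' := map_poly _ h in eh.
have eA2 : A = (- s * ('X : T)%:P * h') * h'.
  apply: sqM_inj; rewrite !sqMM e es ev v1 mulrN1.
  have sN : sqM (- s) = - s by rewrite sqME rmorphN /= -sqME sqM_u.
  have sX : sqM (('X : T)%:P) = (('X : T)%:P) ^+ 2.
    by rewrite sqME map_polyC /= comp_polyX rmorphXn.
  rewrite sN sX; clearbody h'; rewrite eh; ring.
have [] := irr _ _ eA2.
  by rewrite !unitrM unitrN sU (negbTE Xnunit) andbF.
move=> h'U.
have : negM A = - A.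
  have sN : negM (- s) = - s by rewrite negME rmorphN /= -negME negM_u.
  have nX : negM (('X : T)%:P) = - ('X : T)%:P.
    by rewrite negME map_polyC /= comp_polyX rmorphN.
  clearbody h'; rewrite {1}eA2 !negMM sN nX (negM_u h'U) eA2; ring.
rewrite eA => /eqP; rewrite -subr_eq0 opprK => /eqP /twice0B.
by move/eqP; rewrite (negbTE A0).
Qed.

End Fac.

End Main.

Section Final.
Variable F : numClosedFieldType.
Local Notation T := {poly F}.
Local Notation B := (bipoly F).
Implicit Types P Q X Y : B.

Lemma sqL_unit (h : B) : sqL h \is a GRing.unit -> h \is a GRing.unit.
Proof.
move=> U; have := U; rewrite unitB => /andP[/eqP s1 _].
have := size_sqL h; rewrite s1 /= => /esym /eqP; rewrite muln_eq0 orbF => /eqP sh.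
have sh1 : (size h <= 1)%N by move: sh; case: (size h) => [|[]].
by move: U; rewrite /sqL (size1_polyC sh1) comp_polyC.
Qed.

Lemma sqLM P Q : sqL (P * Q) = sqL P * sqL Q.
Proof. by rewrite /sqL comp_polyM. Qed.

Lemma negLM P Q : negL (P * Q) = negL P * negL Q.
Proof. by rewrite /negL comp_polyM. Qed.

Lemma negL_u (u : B) : u \is a GRing.unit -> negL u = u.
Proof. by move/unitE ->; rewrite /negL comp_polyC. Qed.

Lemma Xnunit2 : ('X : B) \isn't a GRing.unit.
Proof. by rewrite unitB size_polyX. Qed.

Lemma lin_irr (d : F) (g h : B) : d != 0 ->
  d%:P%:P * 'X = g * h -> g \is a GRing.unit \/ h \is a GRing.unit.
Proof.
move=> d0 e.
have dP0 : (d%:P%:P : B) != 0 by rewrite !polyC_eq0.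
have sf : size (g * h) = 2%N. rewrite -e mul_polyC size_scale. exact: size_polyX. by rewrite polyC_eq0.
have g0 : g != 0 by apply/eqP => g0; move: sf; rewrite g0 mul0r size_poly0.
have h0 : h != 0 by apply/eqP => h0; move: sf; rewrite h0 mulr0 size_poly0.
move: (sf); rewrite size_mul // => sgh.
have c1 : (g * h)`_1 = d%:P by rewrite -e coefCM coefX /= mulr1.
have key (a b : B) : size a = 1%N -> b != 0 -> (a * b)`_1 = d%:P ->
    a \is a GRing.unit.
  move=> sa b0 eab.
  have ea : a = (a`_0)%:P by apply: size1_polyC; rewrite sa.
  move: eab; rewrite ea coefCM => eab.
  have a00 : a`_0 != 0.
    by apply/eqP => a0; move: eab; rewrite a0 mul0r => /eqP; rewrite eq_sym polyC_eq0 (negbTE d0).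
  have b10 : b`_1 != 0.
    by apply/eqP => b1; move: eab; rewrite b1 mulr0 => /eqP; rewrite eq_sym polyC_eq0 (negbTE d0).
  have := congr1 (fun p : T => size p) eab; rewrite size_mul // size_polyC d0 => s.
  rewrite unitB size_polyC a00 coefC /=; apply/eqP.
  have := size_poly_gt0 (a`_0); have := size_poly_gt0 (b`_1); rewrite a00 b10 /=.
  move: s; move: (size a`_0) (size b`_1) => x y /= s hy hx; lia.

have [sg|sg] : size g = 1%N \/ size h = 1%N.
  move: sgh; have := size_poly_gt0 g; have := size_poly_gt0 h.
  rewrite g0 h0 /=; move: (size g) (size h) => a b; lia.
  by left; apply: key sg h0 c1.
by right; apply: key sg g0 _; rewrite mulrC.
Qed.

Lemma coef0_negL P : (negL P)`_0 = P`_0.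
Proof. by rewrite -!horner_coef0 /negL horner_comp hornerN hornerX oppr0. Qed.

Lemma divX_eq P : P`_0 = 0 -> P = \poly_(i < size P) P`_i.+1 * 'X.
Proof.
move=> p0; apply/polyP => i; rewrite coefMX coef_poly.
case: i => [|i] //=; case: ltnP => // hi.
by rewrite nth_default // (leq_trans hi).
Qed.

Lemma sq1 (k : B) : k * k = 1 -> k = 1 \/ k = -1.
Proof.
move=> kk; have : (k - 1) * (k + 1) = 0 by rewrite mulrDr !mulrBl kk; ring.
by move/eqP; rewrite mulf_eq0 subr_eq0 addr_eq0 => /orP[]/eqP; [left|right].
Qed.

Theorem mainF (A : B) : irreducible_elt A -> negM A = A -> negL A != A ->
  irreducible_elt (sqM (resL A)) /\ degL (resL A) = degL A.
Proof.
move=> irrA eA nLA.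
have [A0 AnU irr] := irrA.
have dA : (0 < degL A)%N.
  rewrite /degL -subn1 subn_gt0 ltnNge; apply/negP => sA.
  by move: nLA; rewrite /negL (size1_polyC sA) comp_polyC eqxx.
set R := resL A.
have eR : sqL R = A * negL A := sqL_resL A.
have nA0 : negL A != 0 by rewrite -size_poly_eq0 size_negL size_poly_eq0.
have dR : degL R = degL A.
  have := size_sqL R; rewrite eR size_mul // size_negL /degL.
  have := size_poly_gt0 A; rewrite A0 /=.
  move: (size A) (size R) => a r; lia.
split; last by [].
set P := sqM A.
have irrP : irreducible_elt P := irr_sqM irrA dA eA.
have dP : (0 < degL P)%N by rewrite /degL /P sqME size_mapc ?size_X2.
set f := sqM R.
have eF : sqL f = P * negL P by rewrite /f -sqM_sqL eR sqMM sqM_negL.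
have sf : size f = size R by rewrite /f sqME size_mapc ?size_X2.
have P0 : P != 0 by case: irrP.
have nP0 : negL P != 0 by rewrite -size_poly_eq0 size_negL size_poly_eq0.
have L2 : forall g h : B, f = g * h -> dvd P (sqL g) ->
    g \isn't a GRing.unit -> h \isn't a GRing.unit -> False.
  move=> g h e [w ew] gU hU.
  have ew' : sqL g = negL P * negL w by rewrite -negL_sqL ew negLM.
  have [[k ek]|[w2 ew2]] :=
    prime_irr irrP dP (ex_intro _ w (etrans (esym ew') ew)).
    have ekk : k * negL k = 1.
      by apply: (mulfI P0); rewrite mulr1 mulrA -ek -negLM -ek negLK.
    have kU : k \is a GRing.unit by apply/unitrPr; exists (negL k).
    have [k1|k1] : k = 1 \/ k = -1 by apply: sq1; rewrite -{2}(negL_u kU).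
      move: nLA; have -> : negL A = A.
        by apply: sqM_inj; rewrite sqM_negL -/P ek k1 mulr1.
      by rewrite eqxx.
    have nA : negL A = - A.
      by apply: sqM_inj; rewrite sqM_negL -/P ek k1 mulrN1 sqME rmorphN.
    have A00 : A`_0 = 0.
      apply: twice0; have := coef0_negL A; rewrite nA coefN => hA.
      by rewrite -{1}hA addNr.
    have eA1 := divX_eq A00.
    set A1 := \poly_(i < size A) A`_i.+1 in eA1.
    have [A1U|XU] := irr _ _ eA1; last by move: XU; rewrite (negbTE Xnunit2).
    have eC := unitE A1U; set c := A1`_0`_0 in eC.
    have c0 : c != 0.
      by apply/eqP => c0; move: A1U; rewrite eC c0 !rmorph0 unitr0.
    have eR' : R = (- c ^+ 2)%:P%:P * 'X.
      apply: sqL_inj; rewrite eR nA eA1 eC /sqL comp_polyM comp_polyC comp_polyX.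
      by rewrite !rmorphN !rmorphXn /=; ring.
    have ef : f = (- c ^+ 2)%:P%:P * 'X.
      by rewrite /f eR' sqMM !sqME mapc_const map_polyX.
    have [] := lin_irr _ (etrans (esym ef) e).
    - by rewrite oppr_eq0 expf_neq0.
    - by rewrite (negbTE gU).
    - by rewrite (negbTE hU).
  have : P * negL P * 1 = P * negL P * (w2 * sqL h).
    by rewrite mulr1 -{1}eF e sqLM ew' ew2; ring.
  move/(mulfI (mulf_neq0 P0 nP0)) => e1.
  have : sqL h \is a GRing.unit by apply/unitrPr; exists w2; rewrite mulrC e1.
  by move/sqL_unit; rewrite (negbTE hU).
split.
- by rewrite -size_poly_eq0 sf; move: dA; rewrite -dR /degL; case: (size R).
- rewrite unitB sf; move: dA; rewrite -dR /degL.
  by case: (size R) => [|[|]].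
move=> g h e.
case gU: (g \is a GRing.unit); first by left.
case hU: (h \is a GRing.unit); first by right.
exfalso.
have hd : dvd P (sqL g * sqL h) by exists (negL P); rewrite -sqLM -e eF.
have [H|H] := prime_irr irrP dP hd.
  by apply: (L2 g h e H); rewrite ?gU ?hU.
by apply: (L2 h g _ H); rewrite ?gU ?hU // e mulrC.
Qed.

End Final.

Theorem proposition4p2 (R : realType) (A : bipoly R[i]) :
  irreducible_elt A ->
  negM A = A ->
  negL A != A ->
  irreducible_elt (sqM (resL A)) /\ degL (resL A) = degL A.
Proof. exact: (@mainF (R[i] : numClosedFieldType) A). Qed.
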